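(* For every integer $l\ge1$, let $\mathcal{I}_6(l)$ be the index coding instance on $[4l+1]$ with $A_{2i-1}=\{2j: j\in[2l]\setminus\{i\}\}\cup\{4l+1\}$ and $A_{2i}=\{2i-1\}$ for $i\in[2l]$, and $A_{4l+1}=\{2i-1: i\in[2l]\}$. Then the UMCD algorithm on $\mathcal{I}_6(l)$ outputs $\beta_{\text{UMCD}}(\mathcal{I}_6(l))=2l+1$.
   Context: Instance: side-information sets $A_i\subseteq[m]\setminus\{i\}$, $B_i=[m]\setminus(A_i\cup\{i\})$. For a $0/1$ matrix $\boldsymbol{G}$ with columns indexed by $[m]$, $\boldsymbol{G}_{[k]}^{L}$ is the submatrix of its first $k$ rows and columns $L$; $\mathrm{mcm}(\boldsymbol{G})$ is the maximum number of $1$-entries no two in a common row or column (0 if no columns). UMCD algorithm: $N=[m]$, $k=0$; while $N\ne\emptyset$: $k\leftarrow k+1$; pick $w\in N$ with $|A_w|$ minimal over $N$ (arbitrary tie-breaking); row $k$ of $\boldsymbol{G}$ is the indicator vector of $\{w\}\cup A_w$; remove $w$ from $N$; remove from $N$ every $i$ with $\mathrm{mcm}(\boldsymbol{G}_{[k]}^{\{i\}\cup B_i})=\mathrm{mcm}(\boldsymbol{G}_{[k]}^{B_i})+1$; output $\beta_{\text{UMCD}}=k$. *)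

(* Defs.v *)
From mathcomp Require Import all_boot.
Set Implicit Arguments. Unset Strict Implicit. Unset Printing Implicit Defensive.

Section UMCD.
Variable m : nat.
(* An index coding instance on [m] (elements of 'I_m, 0-based: the paper's
   index p corresponds to the ordinal with value p-1). *)
Variable A : 'I_m -> {set 'I_m}.

Definition Bset (i : 'I_m) : {set 'I_m} := ~: (i |: A i).

(* The matrix G given by its list of rows; row r is the support set of the
   r-th row (entry (r,c) is 1 iff c \in row r). *)
Definition is_matching (rows : seq {set 'I_m}) (L : {set 'I_m})
    (M : {set 'I_(size rows) * 'I_m}) : bool :=
  [forall e in M, (e.2 \in L) && (e.2 \in nth set0 rows e.1)] &&
  [forall e in M, forall f in M, ((e.1 == f.1) || (e.2 == f.2)) ==> (e == f)].

Arguments is_matching : clear implicits.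
Definition mcm (rows : seq {set 'I_m}) (L : {set 'I_m}) : nat :=
  \max_(M | is_matching rows L M) #|M|.

(* one update of N after adding row for w (rows already includes it) *)
Definition umcd_step (N : {set 'I_m}) (rows : seq {set 'I_m}) (w : 'I_m) :=
  [set i in N :\ w | mcm rows (i |: Bset i) != (mcm rows (Bset i)).+1].

Definition umcd_state (ws : seq 'I_m) : seq {set 'I_m} * {set 'I_m} :=
  foldl (fun st w => let rows := rcons st.1 (w |: A w) in
                     (rows, umcd_step st.2 rows w)) ([::], setT) ws.

(* ws is a complete run of UMCD (for some tie-breaking): each pick w lies in
   the current N and has minimal |A_w| over N, and N is empty at the end. *)
Definition umcd_run (ws : seq 'I_m) : Prop :=
  (forall p s w, ws = p ++ w :: s ->
     w \in (umcd_state p).2 /\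
     forall v, v \in (umcd_state p).2 -> #|A w| <= #|A v|) /\
  (umcd_state ws).2 = set0.
End UMCD.

Definition I6 (l : nat) (x : 'I_(4 * l + 1)) : {set 'I_(4 * l + 1)} :=
  let p := (val x).+1 in
  if p == 4 * l + 1 then
    [set y : 'I_(4 * l + 1) | [exists i : 'I_(2 * l), (val y).+1 == 2 * i + 1]]
  else if odd p then
    (* p = 2i-1, i = p./2 + 1 ; A_p = {2j : j in [2l] \ {i}} U {4l+1} *)
    [set y : 'I_(4 * l + 1) | [exists j : 'I_(2 * l),
        (val j != p./2) && ((val y).+1 == 2 * (j + 1))] || ((val y).+1 == 4 * l + 1)]
  else
    [set y : 'I_(4 * l + 1) | (val y).+1 == p.-1].

(* Main.v *)
Require Import Defs.
From mathcomp Require Import all_boot zify.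
Set Implicit Arguments. Unset Strict Implicit. Unset Printing Implicit Defensive.

Section Gen.
Variable m : nat.
Implicit Types (rows : seq {set 'I_m}) (L : {set 'I_m}).

Lemma matchingP rows L M : @is_matching _ rows L M <->
  (forall e, e \in M -> e.2 \in L /\ e.2 \in nth set0 rows e.1) /\
  (forall e f, e \in M -> f \in M -> (e.1 == f.1) || (e.2 == f.2) -> e = f).
Proof.
rewrite /is_matching; split.
  case/andP=> /forallP H1 /forallP H2; split.
    by move=> e eM; move: (H1 e); rewrite eM /= => /andP.
  move=> e f eM fM H; move: (H2 e); rewrite eM /= => /forallP /(_ f).
  by rewrite fM /= H => /implyP/(_ isT)/eqP.
case=> H1 H2; apply/andP; split; apply/forallP => e; apply/implyP => eM.
  by case: (H1 e eM) => -> ->.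
apply/forallP => f; apply/implyP => fM; apply/implyP => H; apply/eqP; exact: H2.
Qed.

Lemma mcm_ge rows L M : @is_matching _ rows L M -> #|M| <= mcm rows L.
Proof. by move=> H; rewrite /mcm; apply: (leq_bigmax_cond M H). Qed.

Lemma mcm_le rows L n : (forall M, @is_matching _ rows L M -> #|M| <= n) -> mcm rows L <= n.
Proof. by move=> H; apply/bigmax_leqP. Qed.

Lemma mcm_le_rows rows L : mcm rows L <= size rows.
Proof.
apply: mcm_le => M /matchingP [_ H2].
rewrite -(card_in_imset (f := fun e => e.1)).
  by apply: leq_trans (max_card _) _; rewrite card_ord.
by move=> e f eM fM E; apply: H2 => //; rewrite E eqxx.
Qed.

Lemma mcm_le_card rows L : mcm rows L <= #|L|.
Proof.
apply: mcm_le => M /matchingP [H1 H2].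
rewrite -(card_in_imset (f := fun e => e.2)).
  apply: subset_leq_card; apply/subsetP => y /imsetP [e eM ->].
  by case: (H1 e eM).
by move=> e f eM fM E; apply: H2 => //; rewrite E eqxx orbT.
Qed.

Lemma mcm_unused rows c L :
  (forall r : 'I_(size rows), c \notin nth set0 rows r) ->
  mcm rows (c |: L) <= mcm rows L.
Proof.
move=> Hc; apply: mcm_le => M /matchingP [H1 H2]; apply: mcm_ge.
apply/matchingP; split=> // e eM; case: (H1 e eM) => /setU1P [E|->] R //.
by move: (Hc e.1); rewrite -E R.
Qed.

Lemma mcm_swap rows c d L : d \in L ->
  (forall r : 'I_(size rows), c \in nth set0 rows r -> d \in nth set0 rows r) ->
  (forall r r' : 'I_(size rows), d \in nth set0 rows r -> d \in nth set0 rows r' -> r = r') ->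
  mcm rows (c |: L) <= mcm rows L.
Proof.
move=> dL Hcd Hd; apply: mcm_le => M /matchingP [H1 H2].
pose h (e : 'I_(size rows) * 'I_m) := if e.2 == c then (e.1, d) else e.
have h1 e : (h e).1 = e.1 by rewrite /h; case: ifP.
have hinj : {in M &, injective h}.
  by move=> e f eM fM E; apply: H2 => //; rewrite -h1 E h1 eqxx.
rewrite -(card_in_imset hinj); apply: mcm_ge; apply/matchingP; split.
  move=> _ /imsetP [e eM ->]; rewrite /h; case: ifP => [/eqP Ec|/eqP Nc] /=.
    by split=> //; apply: Hcd; rewrite -Ec; case: (H1 e eM).
  by case: (H1 e eM) => /setU1P [//|->] ->.
move=> _ _ /imsetP [e eM ->] /imsetP [f fM ->].
rewrite !h1 => /orP [E1|]; first by have -> : e = f by apply: H2 => //; rewrite E1.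
case: (H1 e eM) => _ Re; case: (H1 f fM) => _ Rf.
rewrite /h; case: ifP => /eqP Ec; case: ifP => /eqP Fc /= /eqP E.
- by have -> : e = f by apply: H2 => //; rewrite Ec Fc eqxx orbT.
- have Re' : c \in nth set0 rows e.1 by rewrite -Ec.
  have := Hd e.1 f.1 (Hcd _ Re'); rewrite E => /(_ Rf) E1.
  have efq : e = f by apply: H2 => //; rewrite E1 eqxx.
  by rewrite efq -surjective_pairing.
- have Rf' : c \in nth set0 rows f.1 by rewrite -Fc.
  have E1 : e.1 = f.1 by apply: Hd; [rewrite -E | exact: Hcd].
  have efq : e = f by apply: H2 => //; rewrite E1 eqxx.
  by rewrite -efq -E -surjective_pairing.
- by apply: H2 => //; rewrite E eqxx orbT.
Qed.

Lemma mcm_plus1 rows c L : mcm rows (c |: L) <= (mcm rows L).+1.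
Proof.
apply: mcm_le => M /matchingP [H1 H2].
case: (pickP [pred e | (e \in M) && (e.2 == c)]) => [e /andP [eM /eqP ec]|H0].
  rewrite (cardsD1 e M) eM add1n ltnS; apply: mcm_ge; apply/matchingP; split.
    move=> f /setD1P [fe fM]; case: (H1 f fM) => /setU1P [fc|//] _.
    by case/eqP: fe; apply: H2 => //; rewrite fc ec eqxx orbT.
  by move=> f g /setD1P [_ fM] /setD1P [_ gM]; apply: H2.
apply: leqW; apply: mcm_ge; apply/matchingP; split=> // e eM.
case: (H1 e eM) => /setU1P [ec|//]; have := H0 e; rewrite /= eM ec eqxx //.
Qed.

Lemma mcm_inj rows L (g : 'I_(size rows) -> 'I_m) : injective g ->
  (forall r, g r \in L /\ g r \in nth set0 rows r) -> size rows <= mcm rows L.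
Proof.
move=> ginj Hg.
have hinj : injective (fun r : 'I_(size rows) => (r, g r)) by move=> r s [].
have := mcm_ge (M := [set (r, g r) | r : 'I_(size rows)]) (rows := rows) (L := L).
rewrite card_imset // card_ord; apply; apply/matchingP; split.
  by move=> _ /imsetP [r _ ->]; exact: Hg.
move=> _ _ /imsetP [r _ ->] /imsetP [s _ ->] /= /orP [/eqP -> //|/eqP E].
by rewrite (ginj _ _ E).
Qed.
End Gen.

Lemma state_rcons m (A : 'I_m -> {set 'I_m}) p w :
  umcd_state A (rcons p w) =
  (rcons (umcd_state A p).1 (w |: A w),
   umcd_step A (umcd_state A p).2 (rcons (umcd_state A p).1 (w |: A w)) w).
Proof. by rewrite /umcd_state foldl_rcons. Qed.

Lemma state_rows m (A : 'I_m -> {set 'I_m}) p :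
  (umcd_state A p).1 = map (fun w => w |: A w) p.
Proof.
elim/last_ind: p => [//|p w IH]; by rewrite state_rcons /= IH map_rcons.
Qed.

Section Inst.
Variable l : nat.
Hypothesis l1 : 1 <= l.
Local Notation n := (4 * l + 1).
Local Notation T := 'I_n.
Local Notation A := (@I6 l).

Lemma memA (x y : T) : y \in A x =
  if (x : nat) == 4 * l then ~~ odd y && (y < 4 * l)
  else if ~~ odd x then (odd y && ((y : nat) != x.+1)) || ((y : nat) == 4 * l)
  else ((y : nat) == x.-1).
Proof.

rewrite /I6 /=; case: ifP => Hx; rewrite ?in_set; have xl := ltn_ord x; have yl := ltn_ord y.
  have -> : ((x : nat) == 4 * l) = true by lia.
  apply/existsP/idP => [[i /eqP Hi]|H].
    have := ltn_ord i; lia.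
  have Hi : (y : nat) %/ 2 < 2 * l by lia.
  exists (Ordinal Hi); apply/eqP => /=; lia.
have -> : ((x : nat) == 4 * l) = false by lia.
case: ifP => Ox; rewrite in_set; last by apply/eqP/eqP; lia.
have -> : (y.+1 == 4 * l + 1) = ((y : nat) == 4 * l) by lia.
rewrite ?uphalfE -!divn2.
congr (_ || _); apply/existsP/idP => [[j /andP [/eqP Hj /eqP E]]|H].
  move: (ltn_ord j) => jl; apply/andP; split; [lia | apply/eqP; lia].
have Hi : (y : nat) %/ 2 < 2 * l by lia.
exists (Ordinal Hi); apply/andP; split; apply/eqP => /=; lia.
Qed.

Lemma memA_odd (x y : T) : odd x -> (y \in A x) = ((y : nat) == x.-1).
Proof. move=> Ox; rewrite memA Ox /=; have := ltn_ord x; case: eqP => //; lia. Qed.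

Lemma memA_last (x y : T) : (x : nat) = 4 * l -> (y \in A x) = ~~ odd y && (y < 4 * l).
Proof. by move=> Ex; rewrite memA Ex eqxx. Qed.

Lemma memA_ev (x y : T) : ~~ odd x -> (x : nat) != 4 * l ->
  (y \in A x) = (odd y && ((y : nat) != x.+1)) || ((y : nat) == 4 * l).
Proof. by move=> Ox Nx; rewrite memA (negbTE Nx) Ox. Qed.

Lemma oeq (a b : T) : (a == b) = ((a : nat) == b).
Proof. by []. Qed.

Lemma n_pos : 0 < n. Proof. by rewrite addn1. Qed.
Definition mk (k : nat) : T := Ordinal (ltn_pmod k n_pos).
Lemma mkE k : k < n -> (mk k : nat) = k.
Proof. by move=> H; rewrite /= modn_small. Qed.

Lemma card_le_img (S : {set T}) (h : 'I_(2 * l) -> T) :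
  (forall y, y \in S -> exists i, y = h i) -> #|S| <= 2 * l.
Proof.
move=> H; apply: leq_trans (subset_leq_card (B := [set h i | i : 'I_(2 * l)]) _) _.
  by apply/subsetP => y /H [i ->]; apply: imset_f.
by apply: leq_trans (leq_imset_card _ _) _; rewrite card_ord.
Qed.

Lemma card_ge_img (S : {set T}) (h : 'I_(2 * l) -> T) :
  injective h -> (forall i, h i \in S) -> 2 * l <= #|S|.
Proof.
move=> hinj H; rewrite -{1}(card_ord (2 * l)) -(card_imset _ hinj).
by apply: subset_leq_card; apply/subsetP => _ /imsetP [i _ ->].
Qed.

Lemma cardA_odd (x : T) : odd x -> #|A x| <= 1.
Proof.
move=> Ox; apply/card_le1_eqP => y z; rewrite !memA_odd // => /eqP Hy /eqP Hz.
by apply: val_inj => /=; rewrite Hy Hz.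
Qed.

Lemma cardA_ev (x : T) : ~~ odd x -> 1 < #|A x|.
Proof.
move=> Ox; have xl := ltn_ord x; apply/card_gt1P.
case: (eqVneq (x : nat) (4 * l)) => Ex.
  exists (mk 0), (mk 2); rewrite !memA_last // oeq; split; rewrite ?mkE; lia.
case: (eqVneq (x : nat) 0) => x0.
  by exists (mk (4 * l)), (mk 3); rewrite !memA_ev // oeq; split; rewrite ?mkE; lia.
by exists (mk (4 * l)), (mk 1); rewrite !memA_ev // oeq; split; rewrite ?mkE; lia.
Qed.

Lemma cardA_pos (x : T) : 0 < #|A x|.
Proof.
have xl := ltn_ord x; apply/card_gt0P.
case Ox: (odd x).
  by exists (mk (x.-1)); rewrite memA_odd // mkE //; lia.
case: (eqVneq (x : nat) (4 * l)) => Ex.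
  exists (mk 0); rewrite !memA_last // !mkE; lia.
by exists (mk (4 * l)); rewrite memA_ev ?Ox // mkE; lia.
Qed.

Lemma cardA_last (x : T) : (x : nat) = 4 * l -> #|A x| <= 2 * l.
Proof.
move=> Ex; apply: card_le_img (fun i => mk (2 * i)) _ => y.
rewrite memA_last // => Hy.
have Hi : (y : nat) %/ 2 < 2 * l by lia.
exists (Ordinal Hi); apply: val_inj; rewrite /= modn_small; lia.
Qed.

Lemma cardA_evge (x : T) : ~~ odd x -> (x : nat) != 4 * l -> 2 * l <= #|A x|.
Proof.
move=> Ox Ex; have xl := ltn_ord x.
apply: (card_ge_img (h := fun i : 'I_(2 * l) =>
   if 2 * i + 1 == x.+1 then mk (4 * l) else mk (2 * i + 1))).
  move=> i j; have := ltn_ord i; have := ltn_ord j.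
  case: eqP => Hi; case: eqP => Hj /= il jl /(congr1 (@nat_of_ord _)) /=;
  rewrite !modn_small; try lia; move=> E; apply: val_inj => /=; lia.
move=> i; have := ltn_ord i => il.
case: eqP => Hi; rewrite memA_ev // mkE; lia.
Qed.

Lemma cardB_ev (v : T) : ~~ odd v -> #|Bset A v| <= 2 * l.
Proof.
move=> Ov; have vl := ltn_ord v.
case: (eqVneq (v : nat) (4 * l)) => Ev.
  apply: card_le_img (fun i => mk (2 * i + 1)) _ => y.
  rewrite /Bset !inE memA_last // oeq => Hy.
  have Hi : (y : nat) %/ 2 < 2 * l by have := ltn_ord y; lia.
  exists (Ordinal Hi); apply: val_inj; rewrite /= modn_small; have := ltn_ord y; lia.
apply: card_le_img (fun i => if 2 * i == v then mk (v.+1) else mk (2 * i)) _ => y.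
rewrite /Bset !inE memA_ev // oeq => Hy.
have yl := ltn_ord y.
case Oy: (odd y).
  have Hi : (v : nat) %/ 2 < 2 * l by lia.
  exists (Ordinal Hi) => /=; case: eqP => E; last by lia.
  apply: val_inj; rewrite /= modn_small; lia.
have Hi : (y : nat) %/ 2 < 2 * l by lia.
exists (Ordinal Hi) => /=; case: eqP => E; first by lia.
apply: val_inj; rewrite /= modn_small; lia.
Qed.

Definition odds : {set T} := [set x : T | odd x].

Lemma card_odds : #|odds| = 2 * l.
Proof.
apply/eqP; rewrite eqn_leq; apply/andP; split.
  apply: card_le_img (fun i => mk (2 * i + 1)) _ => y; rewrite inE => Hy.
  have Hi : (y : nat) %/ 2 < 2 * l by have := ltn_ord y; lia.
  exists (Ordinal Hi); apply: val_inj; rewrite /= modn_small; have := ltn_ord y; lia.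
apply: (card_ge_img (h := fun i : 'I_(2 * l) => mk (2 * i + 1))).
  move=> i j; have := ltn_ord i; have := ltn_ord j => il jl.
  move/(congr1 (@nat_of_ord _)); rewrite /= !modn_small; try lia.
  move=> E; apply: val_inj => /=; lia.
move=> i; have := ltn_ord i => il; rewrite inE mkE; lia.
Qed.

Local Notation f := (fun w : T => w |: A w).
Local Notation z0 := (mk 0).

Lemma memf_odd (x y : T) : odd x -> (y \in x |: A x) = ((y : nat) == x) || ((y : nat) == x.-1).
Proof. by move=> Ox; rewrite !inE memA_odd // oeq. Qed.

Lemma state_nil : umcd_state A [::] = ([::], setT).
Proof. by []. Qed.

Lemma rows_nth (s : seq T) (r : 'I_(size (map f s))) :
  nth set0 (map f s) r = f (nth z0 s r).
Proof. by rewrite (nth_map z0) // -(size_map f); exact: ltn_ord. Qed.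

Lemma ord_size (s : seq T) (r : 'I_(size (map f s))) : r < size s.
Proof. by rewrite -(size_map f); exact: ltn_ord. Qed.

Lemma aux_par (a b c : nat) : ~~ odd a -> (a.+1 == b) || (a.+1 == b.-1) ->
  (a.+1 == c) || (a.+1 == c.-1) -> odd b -> odd c -> b = c.
Proof. lia. Qed.

Lemma phase1 p : uniq p -> all (fun x : T => odd x) p ->
  (umcd_state A p).2 = [set x | x \notin p].
Proof.
elim/last_ind: p => [_ _|p w IH]; first by apply/setP => x; rewrite !inE.
rewrite rcons_uniq all_rcons => /andP [wp up] /andP [ow ap].
rewrite state_rcons state_rows IH // -map_rcons; clear IH.
have us : uniq (rcons p w) by rewrite rcons_uniq wp up.
have as_ : all (fun x : T => odd x) (rcons p w) by rewrite all_rcons ow ap.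
set s := rcons p w in us as_ *.
apply/setP => i; rewrite /umcd_step !inE mem_rcons in_cons.
case: (eqVneq i w) => [->|iw] //=.
case: (boolP (i \in p)) => ip //=.
have is_ : i \notin s by rewrite mem_rcons in_cons (negbTE iw) (negbTE ip).
clearbody s.
suff H : mcm (map f s) (i |: Bset A i) <= mcm (map f s) (Bset A i).
  by rewrite neq_ltn ltnS H.
have Hrow (r : 'I_(size (map f s))) (y : T) : (y \in nth set0 (map f s) r) =
    ((y : nat) == nth z0 s r) || ((y : nat) == (nth z0 s r).-1).
  by rewrite rows_nth memf_odd //; apply: (all_nthP z0 as_); exact: ord_size.
have Ox (r : 'I_(size (map f s))) : odd (nth z0 s r).
  by apply: (all_nthP z0 as_); exact: ord_size.
have xl (r : 'I_(size (map f s))) := ltn_ord (nth z0 s r).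
have il := ltn_ord i.
case Oi: (odd i).
  apply: mcm_unused => r; rewrite Hrow; apply/negP => /orP [/eqP E|/eqP E].
    have Ei : i = nth z0 s r by apply: val_inj.
    by move: is_; rewrite Ei mem_nth // ord_size.
  move: (Ox r) => Oxr; clear -E Oi Oxr; lia.
case: (eqVneq (i : nat) (4 * l)) => Ei.
  apply: mcm_unused => r; rewrite Hrow; move: (Ox r) (xl r) => Oxr xlr.
  clear -Oxr xlr Oi Ei; lia.
have i1 : i.+1 < n by clear -il Oi Ei; lia.
apply: (mcm_swap (d := mk i.+1)).
- rewrite /Bset !inE memA_ev ?Oi // oeq mkE //; clear -il Oi Ei i1; lia.
- move=> r; rewrite !Hrow mkE //; move: (Ox r) => Oxr; clear -Oxr Oi il Ei; lia.
- move=> r r'; rewrite !Hrow mkE // => H1 H2.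
  have E : nth z0 s r = nth z0 s r'.
    by apply: val_inj; apply: (aux_par (negbT Oi) H1 H2 (Ox r) (Ox r')).
  apply: val_inj; apply/eqP; rewrite -(nth_uniq z0 _ _ us) ?ord_size //.
  by rewrite E.
Qed.

Section G.
Variables (p : seq T) (w : T) (G1 : T -> T) (G2 : T).
Hypotheses (up : uniq p) (ap : all (fun x : T => odd x) p).
Definition gfun (r : 'I_(size (map f (rcons p w)))) : T :=
  if r < size p then G1 (nth z0 p r) else G2.

Lemma gfun_inj : (forall x y : T, odd x -> odd y -> G1 x = G1 y -> x = y) ->
  (forall x : T, odd x -> G1 x != G2) -> injective gfun.
Proof.
move=> H1 H2 r r'; have := ord_size r; have := ord_size r'; rewrite size_rcons /gfun.
have Op k : k < size p -> odd (nth z0 p k) by move=> Hk; apply: (all_nthP z0 ap).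
case: ifP => hr; case: ifP => hr' => // Hr' Hr.
- move/(H1 _ _ (Op _ hr) (Op _ hr'))/eqP; rewrite nth_uniq // => /eqP E.
  exact: val_inj.
- by move=> E; move: (H2 _ (Op _ hr)); rewrite E eqxx.
- by move=> E; move: (H2 _ (Op _ hr')); rewrite E eqxx.
- by move=> _; apply: val_inj => /=; lia.
Qed.

Lemma gfun_mem (L : {set T}) : (forall x : T, odd x -> G1 x \in L /\ G1 x \in f x) ->
  G2 \in L /\ G2 \in f w ->
  forall r, gfun r \in L /\ gfun r \in nth set0 (map f (rcons p w)) r.
Proof.
move=> H1 H2 r; rewrite rows_nth nth_rcons /gfun; have := ord_size r.
rewrite size_rcons; case: ifP => hr Hr.
  by apply: H1; apply: (all_nthP z0 ap).
by have -> : (r : nat) == size p by lia.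
Qed.
End G.

Lemma inL (i y : T) : (y \in i |: Bset A i) = (y == i) || (y \notin A i).
Proof. by rewrite /Bset !inE; case: eqP. Qed.

Lemma phase2 (p : seq T) (w : T) : uniq p -> all (fun x : T => odd x) p ->
  (forall x : T, odd x -> x \in p) -> ~~ odd w ->
  (umcd_state A (rcons p w)).2 = set0.
Proof.
move=> up ap allp Ow.
rewrite state_rcons state_rows phase1 // -map_rcons.
have sp : size p = 2 * l.
  rewrite -(card_uniqP up) -card_odds; apply: eq_card => x.
  rewrite inE; apply/idP/idP; [exact: (allP ap) | exact: allp].
have sz : size (map f (rcons p w)) = 2 * l + 1 by rewrite size_map size_rcons sp addn1.
apply/setP => i; rewrite /umcd_step !inE.
case: (eqVneq i w) => [->|iw] /=; first by [].
case: (boolP (i \in p)) => ip; first by [].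
have Oi : ~~ odd i by apply/negP => /allp; rewrite (negbTE ip).
apply/negbTE; rewrite negbK; apply/eqP.
set rows := map f (rcons p w).
have U : mcm rows (i |: Bset A i) <= 2 * l + 1 by rewrite -sz; apply: mcm_le_rows.
have UB : mcm rows (Bset A i) <= 2 * l.
  by apply: leq_trans (mcm_le_card _ _) (cardB_ev Oi).
have P1 := mcm_plus1 rows i (Bset A i).
suff Lo : 2 * l + 1 <= mcm rows (i |: Bset A i) by lia.
have il := ltn_ord i; have wl := ltn_ord w.
have iw' : (i : nat) != w by [].
rewrite -sz; case: (eqVneq (w : nat) (4 * l)) => Ew.
  have Ei : (i : nat) != 4 * l by lia.
  pose G1 (x : T) := mk (if (x : nat) == i.+1 then (x : nat) else x.-1).
  apply: (mcm_inj (g := @gfun p w G1 i)).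
    apply: gfun_inj => // [x y Ox Oy|x Ox]; rewrite /G1.
      have := ltn_ord x; have := ltn_ord y => yl xl.
      move/(congr1 (@nat_of_ord _)); rewrite !mkE; try by case: eqP; lia.
      move=> E; apply/eqP; rewrite oeq; move: E; do 2 case: eqP; lia.
    have := ltn_ord x => xl; rewrite oeq mkE; last by case: eqP; lia.
    by case: ((x : nat) =P i.+1) => /= E; lia.
  apply: gfun_mem => // [x Ox|]; last first.
    split; first by rewrite inL eqxx.
    rewrite !inE memA_last // oeq; lia.
  have xl := ltn_ord x.
  rewrite inL memf_odd // oeq memA_ev // /G1.
  by case: ((x : nat) =P i.+1) => /= Ex; split; rewrite ?modn_small; lia.
case: (eqVneq (i : nat) (4 * l)) => Ei.
  apply: (mcm_inj (g := @gfun p w id i)).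
    apply: gfun_inj => // x Ox; rewrite oeq; lia.
  apply: gfun_mem => // [x Ox|]; last first.
    split; first by rewrite inL eqxx.
    by rewrite !inE memA_ev // Ei eqxx !orbT.
  rewrite inL memf_odd // oeq memA_last // eqxx; split; lia.
pose G1 (x : T) := mk x.-1.
apply: (mcm_inj (g := @gfun p w G1 (mk i.+1))).
  apply: gfun_inj => // [x y Ox Oy|x Ox]; rewrite /G1.
    have := ltn_ord x; have := ltn_ord y => yl xl.
    move/(congr1 (@nat_of_ord _)); rewrite !mkE; try lia.
    move=> E; apply: val_inj => /=; lia.
  have := ltn_ord x => xl; rewrite oeq !mkE; lia.
apply: gfun_mem => // [x Ox|].
  have xl := ltn_ord x.
  rewrite inL memf_odd // oeq memA_ev // /G1 !mkE; lia.
rewrite inL !inE memA_ev // memA_ev // !oeq !mkE; lia.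
Qed.

Lemma decomp (ws : seq T) k : k < size ws ->
  ws = take k ws ++ nth z0 ws k :: drop k.+1 ws.
Proof. by move=> H; rewrite -drop_nth // cat_take_drop. Qed.

Lemma run_grow ws k : umcd_run A ws -> (umcd_state A (take k ws)).2 != set0 ->
  k < size ws.
Proof.
case=> _ R2; rewrite ltnNge; apply: contra => H.
by rewrite take_oversize // R2.
Qed.

Lemma all_odd_take (ws : seq T) k : all (fun x : T => odd x) ws ->
  all (fun x : T => odd x) (take k ws).
Proof. by move/allP => H; apply/allP => x /mem_take /H. Qed.

Lemma run_size ws : umcd_run A ws -> size ws = 2 * l + 1.
Proof.
move=> R; have [R1 R2] := R.
have step k : k <= size ws -> uniq (take k ws) -> all (fun x : T => odd x) (take k ws) ->
    (umcd_state A (take k ws)).2 != set0 ->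
    let w := nth z0 ws k in
    [/\ k < size ws, w \notin take k ws, take k.+1 ws = rcons (take k ws) w &
        forall v, v \notin take k ws -> #|A w| <= #|A v|].
  move=> kw u a N /=; have ks := run_grow R N.
  have [wN wmin] := R1 _ _ _ (decomp ks).
  rewrite (phase1 u a) in wN wmin.
  split=> //; first by move: wN; rewrite inE.
    exact: take_nth.
  by move=> v vq; apply: wmin; rewrite inE.
have P k : k <= 2 * l ->
    [/\ k <= size ws, uniq (take k ws) & all (fun x : T => odd x) (take k ws)].
  elim: k => [_|k IH Hk]; first by rewrite take0.
  have [kw u a] := IH (ltnW Hk).
  have [v vo vq] : exists2 v : T, odd v & v \notin take k ws.
    have : ~~ (odds \subset take k ws).
      apply/negP => S; have := leq_trans (subset_leq_card S) (card_size _).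
      rewrite card_odds size_takel //; clear -Hk; lia.
    by case/subsetPn => v; rewrite inE => vo vq; exists v.
  have N : (umcd_state A (take k ws)).2 != set0.
    apply/set0Pn; exists v; by rewrite (phase1 u a) inE.
  have [ks wq -> wmin] := step k kw u a N.
  have wo : odd (nth z0 ws k).
    apply/negPn/negP => we; move: (cardA_ev we) (wmin v vq) (cardA_odd vo).
    clear; lia.
  by rewrite rcons_uniq wq u all_rcons wo a.
have [kw u a] := P _ (leqnn _).
have sq : size (take (2 * l) ws) = 2 * l by rewrite size_takel.
have allq : forall x : T, odd x -> x \in take (2 * l) ws.
  have : take (2 * l) ws =i odds.
    apply/subset_cardP.
      by rewrite card_odds (card_uniqP u).
    by apply/subsetP => x xq; rewrite inE; apply: (allP a).
  by move=> E x xo; rewrite E inE.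
have lq : mk (4 * l) \notin take (2 * l) ws.
  have l4 : 4 * l < n by clear; lia.
  by apply/negP => /(allP a); rewrite mkE //; clear; lia.
have N : (umcd_state A (take (2 * l) ws)).2 != set0.
  by apply/set0Pn; exists (mk (4 * l)); rewrite (phase1 u a) inE.
have [ks wq E _] := step _ kw u a N.
have we : ~~ odd (nth z0 ws (2 * l)).
  by apply/negP => /allq; rewrite (negbTE wq).
have S0 : (umcd_state A (take (2 * l).+1 ws)).2 = set0.
  by rewrite E phase2.
apply/eqP; rewrite eqn_leq [2 * l + 1]addn1 ks andbT leqNgt; apply/negP => H.
have [wN _] := R1 _ _ _ (decomp H).
by rewrite S0 inE in wN.
Qed.

Lemma run_exists : exists ws, umcd_run A ws.
Proof.
pose oddo (i : 'I_(2 * l)) : T := mk (2 * i + 1).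
have oinj : injective oddo.
  move=> i j; have := ltn_ord i; have := ltn_ord j => jl il.
  move/(congr1 (@nat_of_ord _)); rewrite !mkE; try (clear -il jl; lia).
  by move=> E; apply: val_inj => /=; clear -E; lia.
pose P := map oddo (enum 'I_(2 * l)).
have uP : uniq P by rewrite map_inj_uniq // enum_uniq.
have aP : all (fun x : T => odd x) P.
  apply/allP => _ /mapP [i _ ->]; have := ltn_ord i => il.
  by rewrite mkE; clear -il; lia.
have allP' : forall x : T, odd x -> x \in P.
  move=> x xo; have xl := ltn_ord x.
  have Hi : (x : nat) %/ 2 < 2 * l by clear -xl xo; lia.
  apply/mapP; exists (Ordinal Hi); first by rewrite mem_enum.
  by apply/eqP; rewrite oeq mkE /=; clear -xl xo; lia.
have l4 : 4 * l < n by clear; lia.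
pose lt := mk (4 * l).
have lo : ~~ odd lt by rewrite mkE //; clear; lia.
have ltP : lt \notin P by apply/negP => /(allP aP); rewrite (negbTE lo).
exists (rcons P lt); split; last exact: phase2.
move=> p s w E.
have U : uniq (p ++ w :: s) by rewrite -E rcons_uniq ltP uP.
have wp : w \notin p.
  by move: U; rewrite cat_uniq /= => /and3P [_ /norP [wp _] _].
have Sz : size p <= size P.
  by move: (congr1 size E); rewrite size_rcons size_cat /= => H; clear -H; lia.
have Ep : p = take (size p) (rcons P lt) by rewrite E take_size_cat.
have Ew : w = nth z0 (rcons P lt) (size p) by rewrite E nth_cat ltnn subnn.
case: (ltnP (size p) (size P)) => Hlt.
  rewrite -cats1 takel_cat in Ep; last exact: ltnW.
  have up : uniq p by rewrite Ep take_uniq.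
  have ap : all (fun x : T => odd x) p by rewrite Ep all_odd_take.
  rewrite (phase1 up ap); split; first by rewrite inE.
  have wo : odd w by rewrite Ew nth_rcons Hlt; apply: (all_nthP z0 aP).
  by move=> v _; exact: leq_trans (cardA_odd wo) (cardA_pos v).
have Heq : size p = size P by apply/eqP; rewrite eqn_leq Sz Hlt.
have Ep' : p = P by rewrite Ep Heq -cats1 take_size_cat.
have Ew' : w = lt by rewrite Ew Heq nth_rcons ltnn eqxx.
rewrite Ep' (phase1 uP aP); split; first by rewrite inE -Ep'.
move=> v; rewrite inE => vP.
have ve : ~~ odd v by apply/negP => /allP'; rewrite (negbTE vP).
rewrite Ew'; case: (eqVneq (v : nat) (4 * l)) => Ev.
  by have -> : v = lt by apply/eqP; rewrite oeq mkE // Ev.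
exact: leq_trans (cardA_last (mkE l4)) (cardA_evge ve Ev).
Qed.
End Inst.

Theorem proposition8 (l : nat) : 1 <= l ->
  (exists ws, umcd_run (@I6 l) ws) /\
  forall ws, umcd_run (@I6 l) ws -> size ws = 2 * l + 1.
Proof. by move=> l1; split; [exact: run_exists | exact: run_size]. Qed.
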